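(* For all $c>0$ and $b\ge\max\{c,2\}$, the function $g(x)=\frac{x+b}{x+c}$ on $[0,\infty)$ satisfies $x^2g''(x)-g(\alpha)\,g(x/\alpha)\le0$ for all $x\ge0$ and $\alpha>0$; i.e. $g\in\mathcal{T}^{+}$.
   Context: $\mathcal{T}^{+}$ is the set of functions $g:[0,\infty)\to[0,\infty)$ with $x^2g''(x)-g(\alpha)g(x/\alpha)\le0$ for all $x\ge0$, $\alpha>0$. *)

(* Defs.v *)
From Stdlib Require Import Reals.
From Coquelicot Require Import Coquelicot.
Open Scope R_scope.

(* The class T^+: functions g : [0,oo) -> [0,oo), twice differentiable,
   with x^2 g''(x) - g(alpha) g(x/alpha) <= 0 for all x >= 0, alpha > 0.
   Functions are represented as g : R -> R; only values on [0,oo) matter,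
   except that the second derivative is the (two-sided) Coquelicot
   derivative, which for g defined on a neighbourhood of [0,oo) agrees
   with the one-sided one at 0. *)
Definition in_Tplus (g : R -> R) : Prop :=
  (forall x, 0 <= x -> 0 <= g x) /\
  (forall x, 0 <= x -> ex_derive_n g 2 x) /\
  (forall x alpha, 0 <= x -> 0 < alpha ->
     x ^ 2 * Derive_n g 2 x - g alpha * g (x / alpha) <= 0).

(* Main.v *)
Require Import Defs.
From Stdlib Require Import Reals Lra Psatz.
From Coquelicot Require Import Coquelicot.
Open Scope R_scope.

Lemma key (b c x a : R) (hc : 0 < c) (hbc : c <= b) (hb2 : 2 <= b) (hx : 0 <= x) (ha : 0 < a) :
  2*(b-c)*x^2*((a+c)*(x+c*a)) <= (x+c)^3*((a+b)*(x+b*a)).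
Proof.
  set (d := b - c).
  assert (A1 : 2*d*x^2*(x+c^2) <= (x+c)^3*(b^2+x)).
  { assert (h1 : x^3*b^2 + 3*x^2*c*b^2 <= (x+c)^3*b^2).
    { assert (0 <= 3*x*c^2*b^2 + c^3*b^2) by (apply Rplus_le_le_0_compat; apply Rmult_le_pos; try nra; try (apply pow_le; lra)).
      replace ((x+c)^3*b^2) with (x^3*b^2 + 3*x^2*c*b^2 + (3*x*c^2*b^2 + c^3*b^2)) by ring. lra. }
    assert (h2 : 2*d*x^3 <= x^3*b^2).
    { assert (0 <= x^3) by (apply pow_le; lra).
      assert (0 <= b*(b-2) + 2*c) by nra.
      assert (0 <= x^3*(b*(b-2)+2*c)) by (apply Rmult_le_pos; lra).
      unfold d. nra. }
    assert (h3 : 2*d*x^2*c^2 <= 3*x^2*c*b^2).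
    { assert (0 <= x^2*c) by (apply Rmult_le_pos; [apply pow2_ge_0|lra]).
      assert (2*d*c <= 3*b^2) by (unfold d; nra). nra. }
    assert (0 <= (x+c)^3*x) by (apply Rmult_le_pos; [apply pow_le|]; lra).
    nra. }
  assert (A2 : 2*d*c*x^2 <= b*(x+c)^3).
  { assert (4*(x+c)^3 - 27*c*x^2 = (x-2*c)^2*(4*x+c)) by ring.
    assert (0 <= (x-2*c)^2*(4*x+c)) by (apply Rmult_le_pos; [apply pow2_ge_0|lra]).
    assert (0 <= c*x^2) by (apply Rmult_le_pos; [lra|apply pow2_ge_0]).
    assert (0 <= d) by (unfold d; lra).
    assert (h4 : 27*(c*x^2) <= 4*(x+c)^3) by lra.
    assert (h5 : d*(c*x^2) <= b*(c*x^2)) by (unfold d; nra).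
    assert (h6 : 0 <= (x+c)^3) by (apply pow_le; lra).
    assert (h7 : b*(27*(c*x^2)) <= b*(4*(x+c)^3)) by (apply Rmult_le_compat_l; lra).
    nra. }
  replace ((a+b)*(x+b*a)) with (a*(b^2+x) + b*(a^2+x)) by ring.
  replace ((a+c)*(x+c*a)) with (a*(x+c^2) + c*(a^2+x)) by ring.
  fold d.
  assert (0 <= a^2 + x) by nra.
  nra.
Qed.

Lemma D1 (b c y : R) (h : 0 < y + c) :
  is_derive (fun x => (x + b) / (x + c)) y ((c - b) / (y + c)^2).
Proof. auto_derive. lra. field. lra. Qed.

Lemma D2 (b c y : R) (h : 0 < y + c) :
  is_derive (fun x => (c - b) / (x + c)^2) y (2*(b - c) / (y + c)^3).
Proof. auto_derive. nra. field. lra. Qed.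

Lemma loc (c y : R) (h : 0 < y + c) : locally y (fun t => 0 < t + c).
Proof.
  exists (mkposreal _ h). intros t Ht. unfold ball in Ht; simpl in Ht.
  unfold AbsRing_ball, abs, minus, plus, opp in Ht; simpl in Ht.
  apply Rabs_lt_between in Ht. lra.
Qed.

Lemma D2n (b c y : R) (h : 0 < y + c) :
  is_derive_n (fun x => (x + b) / (x + c)) 2 y (2*(b - c) / (y + c)^3).
Proof.
  simpl. apply is_derive_ext_loc with (fun x => (c - b) / (x + c)^2).
  - apply filter_imp with (2 := loc c y h). intros t Ht.
    symmetry. apply is_derive_unique. apply D1. exact Ht.
  - apply D2. exact h.
Qed.

Theorem lemma11 (b c : R) (hc : 0 < c) (hb : Rmax c 2 <= b) :
  in_Tplus (fun x => (x + b) / (x + c)).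
Proof.
  assert (hbc : c <= b) by (eapply Rle_trans; [apply Rmax_l|exact hb]).
  assert (hb2 : 2 <= b) by (eapply Rle_trans; [apply Rmax_r|exact hb]).
  split; [|split].
  - intros x hx. apply Rdiv_le_0_compat; lra.
  - intros x hx. exists (2*(b - c) / (x + c)^3).
    exact (D2n b c x ltac:(lra)).
  - intros x a hx ha.
    assert (pca : 0 < c*a) by (apply Rmult_lt_0_compat; lra).
    rewrite (is_derive_n_unique _ _ _ _ (D2n b c x ltac:(lra))).
    assert (E : (x / a + b) / (x / a + c) = (x + b*a) / (x + c*a)).
    { field. repeat split; lra. }
    rewrite E.
    assert (Hk := key b c x a hc hbc hb2 hx ha).
    assert (p1 : 0 < (x+c)^3) by (apply pow_lt; lra).
    assert (p2 : 0 < x + c*a) by lra.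
    assert (p3 : 0 < a + c) by lra.
    apply Rle_minus.
    replace ((a + b) / (a + c) * ((x + b * a) / (x + c * a)))
      with (((a+b)*(x+b*a)) / ((a+c)*(x+c*a))) by (field; lra).
    replace (x ^ 2 * (2 * (b - c) / (x + c) ^ 3)) with ((2*(b-c)*x^2) / (x+c)^3) by (field; lra).
    apply Rmult_le_reg_r with ((x+c)^3 * ((a+c)*(x+c*a))).
    { apply Rmult_lt_0_compat; [lra|apply Rmult_lt_0_compat; lra]. }
    replace (2 * (b - c) * x ^ 2 / (x + c) ^ 3 * ((x + c) ^ 3 * ((a + c) * (x + c * a))))
      with (2*(b-c)*x^2*((a+c)*(x+c*a))) by (field; lra).
    replace ((a + b) * (x + b * a) / ((a + c) * (x + c * a)) * ((x + c) ^ 3 * ((a + c) * (x + c * a))))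
      with ((x+c)^3*((a+b)*(x+b*a))) by (field; split; lra).
    exact Hk.
Qed.
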